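(* Let $A\subset\mathbb R^2$ be the convex quadrilateral with counterclockwise vertices $\mathbf v_1=(0,0)$, $\mathbf v_2=(1,0)$, $\mathbf v_3=(0,1)$, $\mathbf v_4=(-1,\tfrac12)$. Let $a\in[-1,1]$ and $$b=\frac{-12-13a+\sqrt{25^2+11\cdot 13\,(1-a^2)}}{4\cdot 13}.$$ Then the point $(a,b)$ lies on the equator of $A$, i.e. $(a,b)\in A$ and the Gibbs coordinates of $(a,b)$ with respect to $\mathbf v_1,\dots,\mathbf v_4$ coincide with its Wachspress coordinates.
   Context: Signed area: $A(\mathbf u_0,\mathbf u_1,\mathbf u_2)=\tfrac12\det[\mathbf u_1-\mathbf u_0,\mathbf u_2-\mathbf u_0]$. Wachspress coordinates of a point $\mathbf x$ in the interior of a convex polygon with counterclockwise vertices $\mathbf v_1,\dots,\mathbf v_n$ (indices mod $n$): weights $w_i(\mathbf x)=A(\mathbf v_{i-1},\mathbf v_i,\mathbf v_{i+1})/\big(A(\mathbf v_{i-1},\mathbf v_i,\mathbf x)\,A(\mathbf x,\mathbf v_i,\mathbf v_{i+1})\big)$, and coordinates $w(\mathbf x,\mathbf v_i)=w_i(\mathbf x)/\sum_j w_j(\mathbf x)$. For $\mathbf x$ on an edge $[\mathbf v_j,\mathbf v_{j+1}]$ the Wachspress coordinates are the barycentric coordinates of $\mathbf x$ with respect to $\mathbf v_j,\mathbf v_{j+1}$ and $0$ for all other vertices. Gibbs coordinates of $\mathbf x$: the unique probability distribution $(p_i)$ on $\{\mathbf v_1,\dots,\mathbf v_n\}$ with $\sum_i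 p_i\mathbf v_i=\mathbf x$ that maximizes the entropy $-\sum_i p_i\log p_i$ (with $0\log0=0$). The equator is the set of points of $A$ where Gibbs and Wachspress coordinates coincide. *)

(* Defs.v *)
From Stdlib Require Import Reals Lra Arith.
Open Scope R_scope.

Definition pt : Type := (R * R)%type.

(* The quadrilateral's vertices, indexed 0..3 (paper's v_1..v_4), indices mod 4. *)
Definition vx (i : nat) : R :=
  match (i mod 4)%nat with 0%nat => 0 | 1%nat => 1 | 2%nat => 0 | _ => -1 end.
Definition vy (i : nat) : R :=
  match (i mod 4)%nat with 0%nat => 0 | 1%nat => 0 | 2%nat => 1 | _ => 1/2 end.
Definition V (i : nat) : pt := (vx i, vy i).

Definition sarea (u0 u1 u2 : pt) : R :=
  / 2 * ((fst u1 - fst u0) * (snd u2 - snd u0) - (fst u2 - fst u0) * (snd u1 - snd u0)).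

Definition sum4 (f : nat -> R) : R := f 0%nat + f 1%nat + f 2%nat + f 3%nat.

Definition prob (p : nat -> R) : Prop :=
  (forall i, (i < 4)%nat -> 0 <= p i) /\ sum4 p = 1.

Definition barycenter (p : nat -> R) : pt :=
  (sum4 (fun i => p i * vx i), sum4 (fun i => p i * vy i)).

Definition in_A (x : pt) : Prop := exists p, prob p /\ barycenter p = x.

Definition in_interior (x : pt) : Prop :=
  exists eps, 0 < eps /\
    forall y : pt, (fst y - fst x)^2 + (snd y - snd x)^2 < eps^2 -> in_A y.

Definition xlogx (t : R) : R := if Rle_dec t 0 then 0 else t * ln t.

Definition entropy (p : nat -> R) : R := - sum4 (fun i => xlogx (p i)).

Definition is_gibbs (x : pt) (p : nat -> R) : Prop :=
  prob p /\ barycenter p = x /\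
  forall q, prob q -> barycenter q = x -> entropy q <= entropy p.

Definition wweight (i : nat) (x : pt) : R :=
  sarea (V (i + 3)) (V i) (V (i + 1)) /
  (sarea (V (i + 3)) (V i) x * sarea x (V i) (V (i + 1))).

Definition is_wachspress (x : pt) (p : nat -> R) : Prop :=
  (in_interior x /\
     forall i, (i < 4)%nat -> p i = wweight i x / sum4 (fun j => wweight j x))
  \/
  (exists j t, (j < 4)%nat /\ 0 <= t <= 1 /\
     x = ((1 - t) * vx j + t * vx (j + 1), (1 - t) * vy j + t * vy (j + 1)) /\
     forall i, (i < 4)%nat ->
       p i = if Nat.eqb i j then 1 - t
             else if Nat.eqb i ((j + 1) mod 4) then t else 0).

(* Main.v *)
Require Import Defs.
From Stdlib Require Import Reals Lra Psatz.
Open Scope R_scope.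

Definition h0 (x y : R) := y.
Definition h1 (x y : R) := 1 - x - y.
Definition h2 (x y : R) := 1 - y + x / 2.
Definition h3 (x y : R) := y + x / 2.
Definition u0 x y := h1 x y * h2 x y / 2.
Definition u1 x y := h2 x y * h3 x y.
Definition u2 x y := 3 / 2 * h3 x y * h0 x y.
Definition u3 x y := h0 x y * h1 x y.
Definition SS x y := u0 x y + u1 x y + u2 x y + u3 x y.
Definition pw x y (i : nat) : R :=
  match i with 0%nat => u0 x y / SS x y | 1%nat => u1 x y / SS x y
  | 2%nat => u2 x y / SS x y | _ => u3 x y / SS x y end.

Lemma pw_probA x y : 0 <= h0 x y -> 0 <= h1 x y -> 0 <= h2 x y -> 0 <= h3 x y ->
  0 < SS x y -> prob (pw x y) /\ barycenter (pw x y) = (x, y).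
Proof.
  intros H0 H1 H2 H3 HS.
  assert (Hu0 : 0 <= u0 x y) by (unfold u0; apply Rmult_le_pos; [apply Rmult_le_pos|]; lra).
  assert (Hu1 : 0 <= u1 x y) by (unfold u1; apply Rmult_le_pos; lra).
  assert (Hu2 : 0 <= u2 x y) by (unfold u2; apply Rmult_le_pos; [apply Rmult_le_pos|]; lra).
  assert (Hu3 : 0 <= u3 x y) by (unfold u3; apply Rmult_le_pos; lra).
  split; [split|].
  - intros i Hi. destruct i as [|[|[|[|i]]]]; simpl; try lia;
    apply Rmult_le_pos; try apply Rlt_le, Rinv_0_lt_compat; lra.
  - unfold sum4, pw. unfold SS. field. unfold SS in HS; lra.
  - unfold barycenter, sum4, vx, vy, pw. simpl. f_equal.
    + apply (Rmult_eq_reg_r (SS x y)); [|lra]. field_simplify; [|lra].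
      unfold SS, u0, u1, u2, u3, h0, h1, h2, h3. field.
    + apply (Rmult_eq_reg_r (SS x y)); [|lra]. field_simplify; [|lra].
      unfold SS, u0, u1, u2, u3, h0, h1, h2, h3. field.
Qed.

Lemma SS_pos x y : 0 < h0 x y -> 0 < h1 x y -> 0 < h2 x y -> 0 < h3 x y -> 0 < SS x y.
Proof.
  intros. unfold SS, u0, u1, u2, u3.
  assert (0 < h1 x y * h2 x y) by (apply Rmult_lt_0_compat; lra).
  assert (0 < h2 x y * h3 x y) by (apply Rmult_lt_0_compat; lra).
  assert (0 < h3 x y * h0 x y) by (apply Rmult_lt_0_compat; lra).
  assert (0 < h0 x y * h1 x y) by (apply Rmult_lt_0_compat; lra).
  lra.
Qed.

Lemma inA_pos x y : 0 < h0 x y -> 0 < h1 x y -> 0 < h2 x y -> 0 < h3 x y -> in_A (x, y).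
Proof.
  intros. exists (pw x y). apply pw_probA; try lra. apply SS_pos; auto.
Qed.

Lemma interior_pos x y : 0 < h0 x y -> 0 < h1 x y -> 0 < h2 x y -> 0 < h3 x y ->
  in_interior (x, y).
Proof.
  intros H0 H1 H2 H3.
  set (m := Rmin (Rmin (h0 x y) (h1 x y)) (Rmin (h2 x y) (h3 x y))).
  assert (Hm0 : m <= h0 x y) by (unfold m; repeat (apply Rmin_glb_lt || idtac);
     eapply Rle_trans; [apply Rmin_l|apply Rmin_l]).
  assert (Hm1 : m <= h1 x y) by (unfold m; eapply Rle_trans; [apply Rmin_l|apply Rmin_r]).
  assert (Hm2 : m <= h2 x y) by (unfold m; eapply Rle_trans; [apply Rmin_r|apply Rmin_l]).
  assert (Hm3 : m <= h3 x y) by (unfold m; eapply Rle_trans; [apply Rmin_r|apply Rmin_r]).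
  assert (Hmp : 0 < m) by (unfold m; repeat apply Rmin_glb_lt; auto).
  exists (m / 2). split; [lra|].
  intros yy Hd. destruct yy as [z w]. simpl in Hd.
  assert (Hsq : forall d e f, 0 < e -> d ^ 2 + f ^ 2 < e ^ 2 -> d < e).
  { intros d e f He Hl. destruct (Rlt_or_le d e) as [|Hde]; auto. exfalso.
    assert (e * e <= d * d) by (apply Rmult_le_compat; lra).
    assert (0 <= f * f) by apply Rle_0_sqr. simpl in Hl. lra. }
  assert (Hz1 : z - x < m / 2) by (apply (Hsq _ _ (w - y)); lra).
  assert (Hz2 : x - z < m / 2) by (apply (Hsq _ _ (w - y)); [lra|]; replace ((x - z)^2) with ((z-x)^2) by ring; lra).
  assert (Hw1 : w - y < m / 2) by (apply (Hsq _ _ (z - x)); lra).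
  assert (Hw2 : y - w < m / 2) by (apply (Hsq _ _ (z - x)); [lra|]; replace ((y - w)^2) with ((w-y)^2) by ring; lra).
  unfold h0, h1, h2, h3 in *.
  apply inA_pos; unfold h0, h1, h2, h3; lra.
Qed.

Lemma xlogx_pos t : 0 < t -> xlogx t = t * ln t.
Proof. intros. unfold xlogx. destruct (Rle_dec t 0); lra. Qed.

Lemma term_le p q : 0 < p -> 0 <= q -> q * ln p - xlogx q <= p - q /\
  (q * ln p - xlogx q = p - q -> q = p).
Proof.
  intros Hp Hq. destruct (Req_dec q 0) as [E|E].
  - subst q. unfold xlogx. destruct (Rle_dec 0 0); [|lra]. split; intros; lra.
  - assert (Hq' : 0 < q) by lra. rewrite xlogx_pos; auto.
    set (yy := p / q).
    assert (Hy : 0 < yy) by (unfold yy; apply Rdiv_lt_0_compat; auto).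
    assert (Hpq : p = q * yy) by (unfold yy; field; lra).
    assert (Hl' : ln p = ln q + ln yy) by (rewrite Hpq at 1; apply ln_mult; auto).
    assert (Hl : ln yy = ln p - ln q) by lra.
    assert (Hle := exp_ineq1_le (ln yy)). rewrite exp_ln in Hle; auto.
    split.
    + replace (q * ln p - q * ln q) with (q * ln yy) by (rewrite Hl; ring).
      rewrite Hpq. nra.
    + intros Heq.
      destruct (Req_dec (ln yy) 0) as [L|L].
      * assert (yy = 1) by (rewrite <- (exp_ln yy), L, exp_0; auto). nra.
      * assert (Hlt := exp_ineq1 (ln yy) L). rewrite exp_ln in Hlt; auto.
        exfalso.
        replace (q * ln p - q * ln q) with (q * ln yy) in Heq by (rewrite Hl; ring).
        rewrite Hpq in Heq. nra.
Qed.

Lemma gibbs_core p q :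
  (forall i, (i < 4)%nat -> 0 < p i) -> prob p -> prob q -> barycenter q = barycenter p ->
  2 * ln (p 1%nat) + 2 * ln (p 3%nat) = 3 * ln (p 0%nat) + ln (p 2%nat) ->
  entropy q <= entropy p /\ (entropy q = entropy p -> forall i, (i < 4)%nat -> q i = p i).
Proof.
  intros Hp [_ Hsp] [Hq Hsq] Hb HL.
  unfold barycenter, sum4, vx, vy in Hb. simpl in Hb. injection Hb as Hb1 Hb2.
  unfold sum4 in Hsp, Hsq.
  assert (P0 := Hp 0%nat ltac:(lia)). assert (P1 := Hp 1%nat ltac:(lia)).
  assert (P2 := Hp 2%nat ltac:(lia)). assert (P3 := Hp 3%nat ltac:(lia)).
  assert (Q0 := Hq 0%nat ltac:(lia)). assert (Q1 := Hq 1%nat ltac:(lia)).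
  assert (Q2 := Hq 2%nat ltac:(lia)). assert (Q3 := Hq 3%nat ltac:(lia)).
  destruct (term_le _ _ P0 Q0) as [T0 E0].
  destruct (term_le _ _ P1 Q1) as [T1 E1].
  destruct (term_le _ _ P2 Q2) as [T2 E2].
  destruct (term_le _ _ P3 Q3) as [T3 E3].
  assert (Hlin : q 0%nat * ln (p 0%nat) + q 1%nat * ln (p 1%nat) + q 2%nat * ln (p 2%nat)
      + q 3%nat * ln (p 3%nat) = p 0%nat * ln (p 0%nat) + p 1%nat * ln (p 1%nat)
      + p 2%nat * ln (p 2%nat) + p 3%nat * ln (p 3%nat)).
  { assert (e1 : q 1%nat = p 1%nat + (q 3%nat - p 3%nat)) by lra.
    assert (e2 : q 2%nat = p 2%nat - (q 3%nat - p 3%nat) / 2) by lra.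
    assert (e0 : q 0%nat = p 0%nat - 3 * (q 3%nat - p 3%nat) / 2) by lra.
    assert (HD9 : q 0%nat * ln (p 0%nat) + q 1%nat * ln (p 1%nat) + q 2%nat * ln (p 2%nat)
      + q 3%nat * ln (p 3%nat) - (p 0%nat * ln (p 0%nat) + p 1%nat * ln (p 1%nat)
      + p 2%nat * ln (p 2%nat) + p 3%nat * ln (p 3%nat)) = (q 3%nat - p 3%nat) / 2 *
      (2 * ln (p 1%nat) + 2 * ln (p 3%nat) - (3 * ln (p 0%nat) + ln (p 2%nat))))
      .
    { rewrite e0, e1, e2. field. }
    rewrite HL in HD9. lra. }
  unfold entropy, sum4. rewrite !(xlogx_pos (p _)) by auto.
  split.
  - lra.
  - intros Heq i Hi. destruct i as [|[|[|[|i]]]]; try lia.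
    + apply E0; lra. + apply E1; lra. + apply E2; lra. + apply E3; lra.
Qed.

Lemma ge_of_sq s k c : 0 <= s -> s * s - k * k = c -> 0 <= c -> k <= s /\ (0 < c -> k < s).
Proof. intros. split; [|intros]; nra. Qed.

Lemma le_of_sq s m c : 0 <= s -> 0 <= m -> m * m - s * s = c -> 0 <= c -> s <= m /\ (0 < c -> s < m).
Proof. intros. split; [|intros]; nra. Qed.

Lemma SS_pos' x y : -1 <= x <= 1 -> 0 <= h0 x y -> 0 <= h1 x y -> 0 <= h2 x y -> 0 <= h3 x y ->
  0 < SS x y.
Proof.
  intros Hx H0 H1 H2 H3.
  assert (E : SS x y = 1/2 * (h0 x y + h2 x y) * (h1 x y + h3 x y)
     + (1/2 * (h2 x y * h3 x y) + h3 x y * h0 x y + 1/2 * (h0 x y * h1 x y)))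
    by (unfold SS, u0, u1, u2, u3; field).
  assert (0 <= h2 x y * h3 x y) by (apply Rmult_le_pos; lra).
  assert (0 <= h3 x y * h0 x y) by (apply Rmult_le_pos; lra).
  assert (0 <= h0 x y * h1 x y) by (apply Rmult_le_pos; lra).
  assert (A1 : h0 x y + h2 x y = 1 + x / 2) by (unfold h0, h2; field).
  assert (A2 : h1 x y + h3 x y = 1 - x / 2) by (unfold h1, h3; field).
  rewrite E, A1, A2. nra.
Qed.

Definition uu x y (i : nat) : R :=
  match i with 0%nat => u0 x y | 1%nat => u1 x y | 2%nat => u2 x y | _ => u3 x y end.

Lemma wweight_eq i x y : (i < 4)%nat -> h0 x y <> 0 -> h1 x y <> 0 -> h2 x y <> 0 -> h3 x y <> 0 ->
  wweight i (x, y) = 2 * uu x y i / (h0 x y * h1 x y * h2 x y * h3 x y).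
Proof.
  intros Hi H0 H1 H2 H3.
  unfold h0, h1, h2, h3 in *.
  destruct i as [|[|[|[|i]]]]; try lia;
  unfold wweight, sarea, V, vx, vy, uu, u0, u1, u2, u3, h0, h1, h2, h3; simpl;
  field; repeat split; try lra.
Qed.

Lemma wach_interior x y : 0 < h0 x y -> 0 < h1 x y -> 0 < h2 x y -> 0 < h3 x y ->
  forall i, (i < 4)%nat -> pw x y i = wweight i (x, y) / sum4 (fun j => wweight j (x, y)).
Proof.
  intros H0 H1 H2 H3 i Hi.
  assert (HS := SS_pos x y H0 H1 H2 H3).
  unfold sum4. rewrite !wweight_eq by (try lia; lra).
  destruct i as [|[|[|[|i]]]]; try lia; unfold pw, uu; unfold SS in HS |- *;
  field; repeat split; lra.
Qed.

Lemma fiber_unique x p :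
  (forall q, prob q -> barycenter q = x -> forall i, (i < 4)%nat -> q i = p i) ->
  prob p -> barycenter p = x ->
  is_gibbs x p /\ (forall q, is_gibbs x q -> forall i, (i < 4)%nat -> q i = p i).
Proof.
  intros H Hp Hb. split.
  - split; [auto|split; [auto|]]. intros q Hq Hbq.
    assert (E := H q Hq Hbq). unfold entropy, sum4.
    rewrite (E 0%nat), (E 1%nat), (E 2%nat), (E 3%nat) by lia. lra.
  - intros q [Hq [Hbq _]]. apply H; auto.
Qed.

Lemma main_core a b s : -1 <= a <= 1 -> 0 <= s -> s * s = 768 - 143 * a ^ 2 ->
  b = (-12 - 13 * a + s) / 52 ->
  in_A (a, b) /\
  exists p : nat -> R,
    is_wachspress (a, b) p /\ is_gibbs (a, b) p /\
    (forall q, is_gibbs (a, b) q -> forall i, (i < 4)%nat -> q i = p i).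
Proof.
  intros Ha Hs Hss Hb.
  destruct (ge_of_sq s (12 + 13 * a) (312 * ((1 - a) * (2 + a)))) as [B0 B0']; auto.
  { rewrite Hss; ring. } { apply Rmult_le_pos; [lra|]. apply Rmult_le_pos; lra. }
  destruct (ge_of_sq s (12 - 13 * a) (312 * ((1 + a) * (2 - a)))) as [B3 B3']; auto.
  { rewrite Hss; ring. } { apply Rmult_le_pos; [lra|]. apply Rmult_le_pos; lra. }
  destruct (le_of_sq s (64 - 39 * a) (1664 * ((1 - a) * (2 - a)))) as [B1 B1']; auto.
  { lra. } { rewrite Hss; ring. } { apply Rmult_le_pos; [lra|]. apply Rmult_le_pos; lra. }
  destruct (le_of_sq s (64 + 39 * a) (1664 * ((1 + a) * (2 + a)))) as [B2 B2']; auto.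
  { lra. } { rewrite Hss; ring. } { apply Rmult_le_pos; [lra|]. apply Rmult_le_pos; lra. }
  assert (G0 : 0 <= h0 a b) by (unfold h0; rewrite Hb; lra).
  assert (G1 : 0 <= h1 a b) by (unfold h1; rewrite Hb; lra).
  assert (G2 : 0 <= h2 a b) by (unfold h2; rewrite Hb; lra).
  assert (G3 : 0 <= h3 a b) by (unfold h3; rewrite Hb; lra).
  assert (HS := SS_pos' a b Ha G0 G1 G2 G3).
  destruct (pw_probA a b G0 G1 G2 G3 HS) as [Hprob Hbar].
  split; [exists (pw a b); auto|].
  exists (pw a b).
  destruct (Req_dec a 1) as [Ea|Ea].
  {
    assert (Eb : b = 0) by (unfold h0, h1 in *; subst a; lra). rewrite Eb in *. clear Hb Eb. subst a.
    assert (Hv : forall i, (i < 4)%nat -> pw 1 0 i =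
        if Nat.eqb i 1 then 1 - 0 else if Nat.eqb i ((1 + 1) mod 4) then 0 else 0).
    { intros i Hi. destruct i as [|[|[|[|i]]]]; try lia; simpl;
      unfold pw, SS, u0, u1, u2, u3, h0, h1, h2, h3; field. }
    split.
    - right. exists 1%nat, 0. split; [lia|split; [lra|split]].
      + unfold vx, vy; simpl. f_equal; field.
      + exact Hv.
    - apply fiber_unique; auto.
      intros q [Hq Hsq] Hbq i Hi.
      unfold barycenter, sum4, vx, vy in Hbq. simpl in Hbq. injection Hbq as E1 E2.
      unfold sum4 in Hsq. rewrite Hv by auto.
      assert (Q0 := Hq 0%nat ltac:(lia)). assert (Q1 := Hq 1%nat ltac:(lia)).
      assert (Q2 := Hq 2%nat ltac:(lia)). assert (Q3 := Hq 3%nat ltac:(lia)).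
      destruct i as [|[|[|[|i]]]]; try lia; simpl; lra. }
  destruct (Req_dec a (-1)) as [Ea'|Ea'].
  {
    assert (Eb : b = 1/2) by (unfold h2, h3 in *; subst a; lra). rewrite Eb in *. clear Hb Eb. subst a.
    assert (Hv : forall i, (i < 4)%nat -> pw (-1) (1/2) i =
        if Nat.eqb i 3 then 1 - 0 else if Nat.eqb i ((3 + 1) mod 4) then 0 else 0).
    { intros i Hi. destruct i as [|[|[|[|i]]]]; try lia; simpl;
      unfold pw, SS, u0, u1, u2, u3, h0, h1, h2, h3; field. }
    split.
    - right. exists 3%nat, 0. split; [lia|split; [lra|split]].
      + unfold vx, vy; simpl. f_equal; field.
      + exact Hv.
    - apply fiber_unique; auto.
      intros q [Hq Hsq] Hbq i Hi.
      unfold barycenter, sum4, vx, vy in Hbq. simpl in Hbq. injection Hbq as E1 E2.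
      unfold sum4 in Hsq. rewrite Hv by auto.
      assert (Q0 := Hq 0%nat ltac:(lia)). assert (Q1 := Hq 1%nat ltac:(lia)).
      assert (Q2 := Hq 2%nat ltac:(lia)). assert (Q3 := Hq 3%nat ltac:(lia)).
      destruct i as [|[|[|[|i]]]]; try lia; simpl; lra. }
  assert (Ha' : -1 < a < 1) by lra.
  assert (P0 : 0 < h0 a b).
  { unfold h0; rewrite Hb. assert (12 + 13 * a < s) by (apply B0'; apply Rmult_lt_0_compat; [lra|]; apply Rmult_lt_0_compat; lra). lra. }
  assert (P3 : 0 < h3 a b).
  { unfold h3; rewrite Hb. assert (12 - 13 * a < s) by (apply B3'; apply Rmult_lt_0_compat; [lra|]; apply Rmult_lt_0_compat; lra). lra. }
  assert (P1 : 0 < h1 a b).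
  { unfold h1; rewrite Hb. assert (s < 64 - 39 * a) by (apply B1'; apply Rmult_lt_0_compat; [lra|]; apply Rmult_lt_0_compat; lra). lra. }
  assert (P2 : 0 < h2 a b).
  { unfold h2; rewrite Hb. assert (s < 64 + 39 * a) by (apply B2'; apply Rmult_lt_0_compat; [lra|]; apply Rmult_lt_0_compat; lra). lra. }
  assert (Hpos : forall i, (i < 4)%nat -> 0 < pw a b i).
  { intros i Hi. destruct i as [|[|[|[|i]]]]; try lia; unfold pw;
    apply Rdiv_lt_0_compat; auto; unfold u0, u1, u2, u3;
    repeat apply Rmult_lt_0_compat; lra. }
  assert (HQ : 26 * b ^ 2 + (13 * a + 12) * b - 3 * (2 - a - a ^ 2) = 0).
  { assert (E : 26 * b ^ 2 + (13 * a + 12) * b - 3 * (2 - a - a ^ 2)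
       = (s * s - (768 - 143 * a ^ 2)) / 104) by (rewrite Hb; field).
    rewrite E, Hss. field. }
  assert (HU : u1 a b * u1 a b * u3 a b * u3 a b - u0 a b * u0 a b * u0 a b * u2 a b
     = h0 a b * h1 a b ^ 2 * h2 a b ^ 2 * h3 a b *
       (26 * b ^ 2 + (13 * a + 12) * b - 3 * (2 - a - a ^ 2)) / 32)
    by (unfold u0, u1, u2, u3, h0, h1, h2, h3; field).
  rewrite HQ in HU.
  assert (HP : pw a b 1%nat * pw a b 1%nat * pw a b 3%nat * pw a b 3%nat
             = pw a b 0%nat * pw a b 0%nat * pw a b 0%nat * pw a b 2%nat).
  { unfold pw. apply (Rmult_eq_reg_r (SS a b ^ 4)); [|apply pow_nonzero; lra].
    field_simplify; [|lra|lra]. lra. }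
  assert (P0' := Hpos 0%nat ltac:(lia)). assert (P1' := Hpos 1%nat ltac:(lia)).
  assert (P2' := Hpos 2%nat ltac:(lia)). assert (P3' := Hpos 3%nat ltac:(lia)).
  assert (HL : 2 * ln (pw a b 1%nat) + 2 * ln (pw a b 3%nat)
             = 3 * ln (pw a b 0%nat) + ln (pw a b 2%nat)).
  { assert (L := f_equal ln HP).
    rewrite !ln_mult in L; try lra;
      repeat (apply Rmult_lt_0_compat; auto). }
  split; [|split].
  - left. split.
    + apply interior_pos; auto.
    + apply wach_interior; auto.
  - split; [auto|split; [auto|]]. intros q Hq Hbq.
    rewrite <- Hbar in Hbq.
    apply (gibbs_core (pw a b) q Hpos Hprob Hq Hbq HL).
  - intros q [Hq [Hbq Hmax]].
    assert (E1 := Hmax (pw a b) Hprob Hbar).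
    rewrite <- Hbar in Hbq.
    destruct (gibbs_core (pw a b) q Hpos Hprob Hq Hbq HL) as [E2 E3].
    apply E3. lra.
Qed.

Theorem theorem5p10 (a : R) (ha : -1 <= a <= 1) :
  let b := (-12 - 13 * a + sqrt (25 ^ 2 + 11 * 13 * (1 - a ^ 2))) / (4 * 13) in
  in_A (a, b) /\
  exists p : nat -> R,
    is_wachspress (a, b) p /\ is_gibbs (a, b) p /\
    (forall q, is_gibbs (a, b) q -> forall i, (i < 4)%nat -> q i = p i).
Proof.
  intros b.
  assert (HD : 0 <= 25 ^ 2 + 11 * 13 * (1 - a ^ 2)) by nra.
  apply (main_core a b (sqrt (25 ^ 2 + 11 * 13 * (1 - a ^ 2)))); auto.
  - apply sqrt_pos.
  - rewrite sqrt_sqrt by auto. ring.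
  - unfold b. field.
Qed.
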